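(* (a) For every metric space $(X,d)$, every Banach contraction $T: X\to X$ is a PA-contraction. (b) There exist a metric space $(X,d)$ and a mapping $T: X \to X$ that is a PA-contraction but not a Banach contraction. Consequently, the class of PA-contractions strictly contains the class of Banach contractions.
   Context: $T^0$ denotes the identity and $T^{k+1}=T\circ T^k$. A mapping $T: X\to X$ on a metric space $(X,d)$ is a Banach contraction if there exists $\beta\in(0,1)$ with $d(Tx,Ty)\le \beta\, d(x,y)$ for all $x,y\in X$. It is a PA-contraction if there exist $\alpha\in(0,1)$ and $N\in\mathbb{N}$ such that for all $x,y\in X$ and all $n\ge N$, $\sum_{k=0}^{n-1} d(T^{k+1}x, T^{k+1}y) \le \alpha \sum_{k=0}^{n-1} d(T^k x, T^k y)$. *)

(* Defs.v *)
From Stdlib Require Import Reals.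
Open Scope R_scope.

Definition is_metric {X : Type} (d : X -> X -> R) : Prop :=
  (forall x y, 0 <= d x y) /\
  (forall x y, d x y = 0 <-> x = y) /\
  (forall x y, d x y = d y x) /\
  (forall x y z, d x z <= d x y + d y z).

Fixpoint iter {X : Type} (T : X -> X) (k : nat) (x : X) : X :=
  match k with
  | O => x
  | S k' => T (iter T k' x)
  end.

Fixpoint sum_lt (n : nat) (f : nat -> R) : R :=
  match n with
  | O => 0
  | S n' => sum_lt n' f + f n'
  end.

Definition banach_contraction {X : Type} (d : X -> X -> R) (T : X -> X) : Prop :=
  exists beta : R, 0 < beta < 1 /\ forall x y, d (T x) (T y) <= beta * d x y.

Definition PA_contraction {X : Type} (d : X -> X -> R) (T : X -> X) : Prop :=
  exists (alpha : R) (N : nat), 0 < alpha < 1 /\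
    forall x y (n : nat), (N <= n)%nat ->
      sum_lt n (fun k => d (iter T (S k) x) (iter T (S k) y))
      <= alpha * sum_lt n (fun k => d (iter T k x) (iter T k y)).

(* Main.v *)
Require Import Defs.
From Stdlib Require Import Reals Lra Lia.
Open Scope R_scope.

Lemma sum_contr (f g : nat -> R) (b : R) n :
  (forall k, g k <= b * f k) -> sum_lt n g <= b * sum_lt n f.
Proof.
  intros H; induction n as [|n IH]; simpl.
  - lra.
  - specialize (H n). lra.
Qed.

Inductive P3 := pa | pb | pc.
Definition P3eq (x y : P3) : bool :=
  match x, y with pa, pa | pb, pb | pc, pc => true | _, _ => false end.
Definition d3 (x y : P3) : R := if P3eq x y then 0 else 1.
Definition T3 (x : P3) : P3 := match x with pa => pb | _ => pc end.

Lemma iter2 k x : iter T3 (S (S k)) x = pc.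
Proof.
  induction k as [|k IH]; [destruct x; reflexivity|].
  change (iter T3 (S (S (S k))) x) with (T3 (iter T3 (S (S k)) x)).
  rewrite IH; reflexivity.
Qed.

Lemma sum2 (f : nat -> R) m :
  (forall k, (2 <= k)%nat -> f k = 0) -> sum_lt (S (S m)) f = f 0%nat + f 1%nat.
Proof.
  intros H; induction m as [|m IH].
  - simpl. lra.
  - change (sum_lt (S (S (S m))) f) with (sum_lt (S (S m)) f + f (S (S m))).
    rewrite IH, (H (S (S m))) by lia. lra.
Qed.

Theorem theorem2 :
  (forall (X : Type) (d : X -> X -> R) (T : X -> X),
      is_metric d -> banach_contraction d T -> PA_contraction d T) /\
  (exists (X : Type) (d : X -> X -> R) (T : X -> X),
      is_metric d /\ PA_contraction d T /\ ~ banach_contraction d T).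
Proof.
  split.
  - intros X d T _ [beta [Hb H]]. exists beta, 0%nat. split; [exact Hb|].
    intros x y n _. apply sum_contr. intros k. simpl. apply H.
  - exists P3, d3, T3. split; [|split].
    + unfold is_metric, d3. split; [|split; [|split]].
      * intros x y; destruct x, y; simpl; lra.
      * intros x y; destruct x, y; simpl; split; intros; try lra; try discriminate; reflexivity.
      * intros x y; destruct x, y; reflexivity.
      * intros x y z; destruct x, y, z; simpl; lra.
    + exists (1/2), 2%nat. split; [lra|].
      intros x y n Hn. destruct n as [|[|m]]; [lia|lia|].
      rewrite !sum2.
      * destruct x, y; simpl; unfold d3; simpl; lra.
      * intros k Hk. destruct k as [|[|k]]; [lia|lia|]. rewrite !iter2. reflexivity.
      * intros k Hk. destruct k as [|k]; [lia|]. rewrite !iter2. reflexivity.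
    + intros [beta [Hb H]]. specialize (H pa pc). unfold d3 in H; simpl in H. lra.
Qed.
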